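(* Let $A$ be a finite alphabet. If $u_1$ is $\ell_1$-rich and $u_2$ is $\ell_2$-rich, then for all $v,v'\in A^*$, $v\sim_n v'$ implies $u_1vu_2\sim_{\ell_1+n+\ell_2}u_1v'u_2$.
   Context: A word $u\in A^*$ is rich if every letter of $A$ occurs in it. For $\ell\in\mathbb{N}$, $u$ is $\ell$-rich if it can be written $u=u_1\cdots u_\ell u'$ where $u_1,\ldots,u_\ell$ are rich. $u\sim_n v$ iff $u$ and $v$ have exactly the same (scattered) subwords of length at most $n$. *)

(* Defs.v *)
From mathcomp Require Import all_boot.
Set Implicit Arguments. Unset Strict Implicit. Unset Printing Implicit Defensive.

Definition rich (A : finType) (u : seq A) : Prop := forall a : A, a \in u.

Definition lrich (A : finType) (l : nat) (u : seq A) : Prop :=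
  exists (us : seq (seq A)) (u' : seq A),
    size us = l /\ (forall x, x \in us -> rich x) /\ u = flatten us ++ u'.

Definition simn (A : finType) (n : nat) (u v : seq A) : Prop :=
  forall w : seq A, size w <= n -> subseq w u = subseq w v.

(* Main.v *)
Require Import Defs.
From mathcomp Require Import all_boot.

Section S.
Variable A : finType.

Fixpoint gr (p w : seq A) : seq A :=
  match p, w with
  | c :: p', a :: w' => gr p' (if a == c then w' else w)
  | _, _ => w
  end.

Lemma gr_cat (p x w : seq A) : subseq w (p ++ x) = subseq (gr p w) x.
Proof.
elim: p w => [|c p IH] [|a w] //=; by rewrite ?sub0seq ?IH.
Qed.

Lemma gr_size (p w : seq A) : size (gr p w) <= size w.
Proof.
elim: p w => [|c p IH] [|a w] //=.
case: eqP => _; last exact: IH.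
exact: leq_trans (IH w) (leqnSn _).
Qed.

Lemma gr_size_in (p w : seq A) a : a \in p -> size (gr p (a :: w)) <= size w.
Proof.
elim: p => [|c p IH] //=; rewrite inE.
case: eqP => [->|_] /=; first by rewrite gr_size.
exact: IH.
Qed.

Lemma simn_cat_l n (p x y : seq A) : simn n x y -> simn n (p ++ x) (p ++ y).
Proof.
move=> h w hw; rewrite !gr_cat; apply: h; exact: leq_trans (gr_size _ _) hw.
Qed.

Lemma simn_rich m (r x y : seq A) : rich r -> simn m x y -> simn m.+1 (r ++ x) (r ++ y).
Proof.
move=> hr h [|a w] hw; first by rewrite !sub0seq.
have hw1 : size w <= m by []. 
rewrite !gr_cat; apply: h.
apply: (leq_trans _ hw1); exact: gr_size_in.
Qed.

Lemma simn_flat n (us : seq (seq A)) x y : (forall r, r \in us -> rich r) ->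
  simn n x y -> simn (size us + n) (flatten us ++ x) (flatten us ++ y).
Proof.
elim: us => [|r us IH] //= hus h.
rewrite -!catA addSn; apply: simn_rich; first by apply: hus; rewrite inE eqxx.
apply: IH h => s hs; apply: hus; rewrite inE hs orbT.
done.
Qed.

Lemma simn_rev n (x y : seq A) : simn n x y -> simn n (rev x) (rev y).
Proof.
move=> h w hw; rewrite -(revK w) !subseq_rev; apply: h; by rewrite size_rev.
Qed.

Lemma simn_left l n (u x y : seq A) : lrich l u -> simn n x y ->
  simn (l + n) (u ++ x) (u ++ y).
Proof.
move=> [us [u' [hs [hr ->]]]] h; rewrite -!catA -hs.
apply: simn_flat => //; exact: simn_cat_l.
Qed.

Lemma simn_right l n (u x y : seq A) : lrich l u -> simn n x y ->
  simn (n + l) (x ++ u) (y ++ u).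
Proof.
move=> [us [u' [hs [hr ->]]]] h.
rewrite -(revK (x ++ _)) -(revK (y ++ _)); apply: simn_rev.
rewrite !rev_cat rev_flatten -!catA; apply: simn_cat_l.
rewrite addnC -hs -(size_map rev) -size_rev.
apply: simn_flat; last exact: simn_rev.
move=> r; rewrite mem_rev => /mapP [s hs0 ->] a; rewrite mem_rev; exact: hr.
Qed.
End S.

Theorem lemma4 (A : finType) (l1 l2 n : nat) (u1 u2 : seq A) :
  lrich l1 u1 -> lrich l2 u2 ->
  forall v v' : seq A, simn n v v' ->
    simn (l1 + n + l2) (u1 ++ v ++ u2) (u1 ++ v' ++ u2).
Proof.
move=> h1 h2 v v' h; rewrite -addnA; apply: simn_left => //.
exact: simn_right.
Qed.
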